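(* Let $A$ be a finite alphabet and $k\ge 1$. Let $x,y\in A^*$ be $k$-binomially equivalent. Then for all words $p,q,r\in A^*$, the words $pxqyr$ and $pyqxr$ are $(k+1)$-binomially equivalent.
   Context: For words $w,z\in A^*$, $\binom{w}{z}$ denotes the number of occurrences of $z$ as a (scattered) subword of $w$, i.e. the number of strictly increasing maps $\varphi:\{1,\ldots,|z|\}\to\{1,\ldots,|w|\}$ with $w_{\varphi(1)}\cdots w_{\varphi(|z|)}=z$ (with $\binom{w}{\varepsilon}=1$). Two words $u,v$ are $m$-binomially equivalent if $\binom{u}{z}=\binom{v}{z}$ for all words $z$ of length at most $m$. *)

(* Defs.v *)
From mathcomp Require Import all_boot.
Set Implicit Arguments. Unset Strict Implicit. Unset Printing Implicit Defensive.

(* binom w z = number of occurrences of z as a scattered subword of w,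
   i.e. number of strictly increasing embeddings of positions of z into w. *)
Fixpoint binom (A : eqType) (w z : seq A) : nat :=
  match z with
  | [::] => 1
  | b :: z' =>
    match w with
    | [::] => 0
    | a :: w' => binom w' z + (a == b) * binom w' z'
    end
  end.

Definition binom_equiv (A : eqType) (m : nat) (u v : seq A) : Prop :=
  forall z : seq A, size z <= m -> binom u z = binom v z.

(* Main.v *)
Require Import Defs.
From mathcomp Require Import all_boot zify.
Set Implicit Arguments. Unset Strict Implicit. Unset Printing Implicit Defensive.
Lemma binom_nil (A : eqType) (z : seq A) : binom [::] z = (z == [::]).
Proof. by case: z. Qed.
Lemma binom0 (A : eqType) (w : seq A) : binom w [::] = 1.
Proof. by case: w. Qed.
Lemma binom_cat (A : eqType) (u v z : seq A) :
  binom (u ++ v) z = \sum_(i < (size z).+1) binom u (take i z) * binom v (drop i z).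
Proof.
elim: u z => [|a u IH] z.
  rewrite big_ord_recl take0 drop0 big1 ?addn0 ?mul1n //.
  move=> i _; rewrite lift0 binom_nil.
  by case: z i => [|b z] []...
case: z => [|b z].
 by rewrite big_ord_recl /= big_ord0 binom0.
rewrite [LHS]/= !IH big_ord_recl [in RHS]big_ord_recl.
under [in RHS]eq_bigr => i _ do rewrite lift0 take_cons drop_cons [binom (a :: u) _]/= mulnDl.
rewrite !take0 !binom0.
have E : \sum_(i < size (b :: z)) binom u (take (lift ord0 i) (b :: z)) * binom v (drop (lift ord0 i) (b :: z)) = \sum_(i < (size z).+1) binom u (b :: take i z) * binom v (drop i z).
  by apply: eq_bigr => i _; rewrite lift0.
rewrite E big_distrr -addnA big_split /=; congr (_ + (_ + _)).
by apply: eq_bigr => i _; rewrite mulnA.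
Qed.

Lemma size_take_le (A : Type) (i : nat) (z : seq A) : size (take i z) <= minn i (size z).
Proof. by rewrite size_take_min. Qed.

Lemma cong_l (A : eqType) k (x y v z : seq A) : binom_equiv k x y -> size z <= k ->
  binom (x ++ v) z = binom (y ++ v) z.
Proof.
move=> H hz; rewrite !binom_cat; apply: eq_bigr => i _; rewrite H //.
apply: leq_trans (size_take_le _ _) _; exact: leq_trans (geq_minr _ _) hz.
Qed.

Lemma cong_r (A : eqType) k (x y u z : seq A) : binom_equiv k x y -> size z <= k ->
  binom (u ++ x) z = binom (u ++ y) z.
Proof.
move=> H hz; rewrite !binom_cat; apply: eq_bigr => i _; rewrite (H (drop i z)) //.
by rewrite size_drop; apply: leq_trans (leq_subr _ _) hz.
Qed.

Lemma cong_mid (A : eqType) k (x y u v z : seq A) : binom_equiv k x y -> size z <= k ->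
  binom (u ++ x ++ v) z = binom (u ++ y ++ v) z.
Proof.
move=> H hz; rewrite !binom_cat; apply: eq_bigr => i _; rewrite (cong_l _ H) //.
by rewrite size_drop; apply: leq_trans (leq_subr _ _) hz.
Qed.

Lemma split_last (A : eqType) (x r z : seq A) :
  binom (x ++ r) z = \sum_(i < size z) binom x (take i z) * binom r (drop i z) + binom x z.
Proof.
by rewrite binom_cat big_ord_recr /= ?take_size ?drop_size ?binom0 ?muln1.
Qed.

Lemma split_first (A : eqType) (p w z : seq A) :
  binom (p ++ w) z = binom w z + \sum_(i < size z) binom p (take i.+1 z) * binom w (drop i.+1 z).
Proof.
rewrite binom_cat big_ord_recl take0 drop0 binom0 mul1n; congr (_ + _).
Qed.

Lemma split_both (A : eqType) n (P Q z : seq A) : size z = n.+1 ->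
  binom (P ++ Q) z = binom Q z + \sum_(i < n) binom P (take i.+1 z) * binom Q (drop i.+1 z) + binom P z.
Proof.
move=> hz; rewrite split_first hz big_ord_recr /= -addnA; congr (_ + (_ + _)).
by rewrite -hz take_size drop_size binom0 muln1.
Qed.

Lemma E_last (A : eqType) k (x y r z : seq A) : binom_equiv k x y -> size z = k.+1 ->
  binom (x ++ r) z + binom y z = binom (y ++ r) z + binom x z.
Proof.
move=> H hz; rewrite !split_last.
have -> : \sum_(i < size z) binom x (take i z) * binom r (drop i z)
        = \sum_(i < size z) binom y (take i z) * binom r (drop i z).
  apply: eq_bigr => i _; rewrite H //.
  apply: leq_trans (size_take_le _ _) _; apply: leq_trans (geq_minl _ _) _.
  by rewrite -ltnS -hz.
by rewrite -!addnA [binom x z + _]addnC.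
Qed.

Lemma E_first (A : eqType) k (x y p w z : seq A) : binom_equiv k x y -> size z = k.+1 ->
  binom (p ++ x ++ w) z + binom (y ++ w) z = binom (p ++ y ++ w) z + binom (x ++ w) z.
Proof.
move=> H hz; rewrite !(split_first p).
have -> : \sum_(i < size z) binom p (take i.+1 z) * binom (x ++ w) (drop i.+1 z)
        = \sum_(i < size z) binom p (take i.+1 z) * binom (y ++ w) (drop i.+1 z).
  apply: eq_bigr => i _; rewrite (cong_l _ H) //.
  rewrite size_drop; lia.
lia.
Qed.

Theorem mainTheorem3 (A : finType) (k : nat) (x y : seq A) :
  1 <= k -> binom_equiv k x y ->
  forall p q r : seq A,
    binom_equiv k.+1 (p ++ x ++ q ++ y ++ r) (p ++ y ++ q ++ x ++ r).
Proof.
move=> hk H p q r z hz.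
case: (ltnP (size z) k.+1) => [hlt | hge].
  rewrite (cong_mid _ _ H hlt).
  have := cong_mid (p ++ y ++ q) r (fun w h => esym (H w h)) hlt.
  by rewrite -!catA.
have hz' : size z = k.+1 by apply/eqP; rewrite eqn_leq hz hge.
have -> : p ++ x ++ q ++ y ++ r = ((p ++ x) ++ q) ++ (y ++ r) by rewrite -!catA.
have -> : p ++ y ++ q ++ x ++ r = ((p ++ y) ++ q) ++ (x ++ r) by rewrite -!catA.
rewrite (split_both ((p ++ x) ++ q) (y ++ r) hz') (split_both ((p ++ y) ++ q) (x ++ r) hz').
have e1 : binom (x ++ r) z + binom y z = binom (y ++ r) z + binom x z := E_last r H hz'.
have e2 : binom (p ++ x ++ q) z + binom (y ++ q) z = binom (p ++ y ++ q) z + binom (x ++ q) z := E_first p q H hz'.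
have e3 : binom (x ++ q) z + binom y z = binom (y ++ q) z + binom x z := E_last q H hz'.
have -> : \sum_(i < k) binom ((p ++ x) ++ q) (take i.+1 z) * binom (y ++ r) (drop i.+1 z)
  = \sum_(i < k) binom ((p ++ y) ++ q) (take i.+1 z) * binom (x ++ r) (drop i.+1 z).
  apply: eq_bigr => i _.
  have hi := ltn_ord i.
  rewrite -!catA (cong_mid _ _ H) ?(cong_l _ (fun w h => esym (H w h))) //.
    rewrite size_drop; lia.
  apply: leq_trans (size_take_le _ _) _; apply: leq_trans (geq_minl _ _) _; lia.
rewrite -!catA. have E : binom (y++r) z + binom (p++x++q) z = binom (x++r) z + binom (p++y++q) z by lia.
lia.
Qed.
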